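(* Let $p_0$ be the standard Gaussian density on $\mathbb{R}^d$ with probability measure $P_0$, let $g_\theta: \mathbb{R}^d \to \mathbb{R}^d$ be measurable, let $r: \mathbb{R}^d \to \mathbb{R}$ be measurable, and let $\alpha > 0$ with $\mathbb{E}_{{\mathbf{x}}_0 \sim p_0}[e^{r(g_\theta({\mathbf{x}}_0))/\alpha}] < \infty$. Let $p^{\mathrm{base}}$ be the density of the pushforward measure $(g_\theta)_\sharp P_0$, and let $$p^\star({\mathbf{x}}) = \frac{1}{Z^\star} p^{\mathrm{base}}({\mathbf{x}}) \exp\!\left(\frac{r({\mathbf{x}})}{\alpha}\right), \qquad Z^\star = \int_{\mathbb{R}^d} p^{\mathrm{base}}({\mathbf{x}}) \exp\!\left(\frac{r({\mathbf{x}})}{\alpha}\right) d{\mathbf{x}} = \int_{\mathbb{R}^d} p_0({\mathbf{x}}_0)\exp\!\left(\frac{r(g_\theta({\mathbf{x}}_0))}{\alpha}\right) d{\mathbf{x}}_0.$$ Define the tilted noise density $$p_0^\star({\mathbf{x}}_0) = \frac{1}{Z^\star} p_0({\mathbf{x}}_0) \exp\!\left(\frac{r(g_\theta({\mathbf{x}}_0))}{\alpha}\right)$$ with corresponding probability measure $P_0^\star$. Then: (1) the pushforward measure $(g_\theta)_\sharp P_0^\star$ has density $p^\star$; (2) $p_0^\star$ is the unique minimizer of $D_{\mathrm{KL}}(q_0 \| p_0)$ over all noise densities $q_0$ on $\mathbb{R}^d$ such that the pushforward $(g_\theta)_\sharp Q_0$ of the corresponding probability measure $Q_0$ has density $p^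\star$.
   Context: For a measurable map $g$ and measure $P$, $(g)_\sharp P(A) = P(g^{-1}(A))$ for Borel sets $A$. $D_{\mathrm{KL}}(q\|p) = \int q \log(q/p)$ is the Kullback–Leibler divergence. It is assumed that $(g_\theta)_\sharp P_0$ admits a density $p^{\mathrm{base}}$ with respect to Lebesgue measure.
   Formalization: Uniqueness of the minimizer in part (2) holds only when $D_{\mathrm{KL}}(p_0^\star \| p_0)$ is finite, while the minimality of $p_0^\star$ is asserted without that condition. Apart from conventions, each condition added here is assumed in the paper as well or is needed for the statement above to hold. *)

(* Defs.v *)
From HB Require Import structures.
From mathcomp Require Import all_boot all_order all_algebra.
From mathcomp Require Import all_classical all_reals all_analysis.
Set Implicit Arguments. Unset Strict Implicit. Unset Printing Implicit Defensive.
Import Order.TTheory GRing.Theory Num.Theory.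
Import numFieldNormedType.Exports.
Local Open Scope classical_set_scope.
Local Open Scope ring_scope.

(* R^d is modelled as d.-tuple R, with the library's product (= Borel)
   sigma-algebra generated by the coordinate projections. *)

(* [lam] is Lebesgue measure on R^d: it gives every closed box its volume.
   This property determines the measure uniquely on the Borel sets. *)
Definition is_lebesgue_measure (R : realType) (d : nat)
  (lam : {measure set (d.-tuple R) -> \bar R}) : Prop :=
  forall a b : 'I_d -> R, (forall i, a i <= b i) ->
    lam [set x | forall i, a i <= tnth x i <= b i] =
    (\prod_(i < d) (b i - a i))%:E.

Definition std_gauss (R : realType) (d : nat) (x : d.-tuple R) : R :=
  (Num.sqrt (2 * pi) ^+ d)^-1 * expR (- (\sum_(i < d) tnth x i ^+ 2) / 2).

Definition is_density (R : realType) (d : nat)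
  (lam : {measure set (d.-tuple R) -> \bar R}) (q : d.-tuple R -> R) : Prop :=
  [/\ measurable_fun setT q, (forall x, 0 <= q x) &
      (\int[lam]_x (q x)%:E = 1)%E].

Definition pushforward_has_density (R : realType) (d : nat)
  (lam : {measure set (d.-tuple R) -> \bar R}) (g : d.-tuple R -> d.-tuple R)
  (q p : d.-tuple R -> R) : Prop :=
  forall A : set (d.-tuple R), measurable A ->
    (\int[lam]_(x in g @^-1` A) (q x)%:E = \int[lam]_(x in A) (p x)%:E)%E.

(* pointwise integrand of KL divergence, with the usual conventions
   0 log(0/b) = 0 and a log(a/0) = +oo for a > 0 *)
Definition kl_integrand (R : realType) (a b : R) : \bar R :=
  if a == 0 then 0%E else if b <= 0 then +oo%E else (a * ln (a / b))%:E.

Definition KL (R : realType) (d : nat)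
  (lam : {measure set (d.-tuple R) -> \bar R}) (q p : d.-tuple R -> R) : \bar R :=
  (\int[lam]_x kl_integrand (q x) (p x))%E.

(* Main.v *)
Require Import Defs.
From HB Require Import structures.
From mathcomp Require Import all_boot all_order all_algebra.
From mathcomp Require Import all_classical all_reals all_analysis.
From mathcomp Require Import measurable_realfun.
From mathcomp Require Import lra ring.
Import Order.TTheory GRing.Theory Num.Theory.
Import numFieldNormedType.Exports.
Local Open Scope classical_set_scope.
Local Open Scope ring_scope.
Set Implicit Arguments. Unset Strict Implicit.

Section push.
Context (dd : measure_display) (T : measurableType dd) (R : realType).
Variable (mu : {measure set T -> \bar R}).
Variables (g : T -> T) (mg : measurable_fun setT g).

Lemma int_indic (p : T -> R) (A : set T) :
  (\int[mu]_x ((p x * \1_A x)%:E) = \int[mu]_(x in A) (p x)%:E)%E.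
Proof.
rewrite [RHS]integral_mkcond; apply: eq_integral => x _.
by rewrite /patch indicE; case: ifP => _; rewrite ?mulr1 ?mulr0.
Qed.

Variables (q p : T -> R) (q0 : forall x, 0 <= q x) (p0 : forall x, 0 <= p x).
Variables (mq : measurable_fun setT q) (mp : measurable_fun setT p).
Hypothesis H : forall A, measurable A ->
  (\int[mu]_(x in g @^-1` A) (q x)%:E = \int[mu]_(x in A) (p x)%:E)%E.

Import HBNNSimple.

Lemma push_nnsfun (h : {nnsfun T >-> R}) :
  (\int[mu]_x ((q x * h (g x))%:E) = \int[mu]_x ((p x * h x)%:E))%E.
Proof.
have mI (B : set T) : measurable B -> measurable_fun setT (\1_B : T -> R).
  by move=> mB; exact: measurable_indic.
have hI y z : 0 <= y * \1_(h @^-1` [set y]) z.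
  by have := nnfun_muleindic_ge0 h y z; rewrite -EFinM lee_fin.
under eq_integral do rewrite fimfunE mulr_fsumr -fsumEFin//.
under [RHS]eq_integral do rewrite fimfunE mulr_fsumr -fsumEFin//.
rewrite ge0_integral_fsum//; last 2 first.

- move=> y; apply/measurable_EFinP; apply: measurable_funM => //.
  apply: measurable_funM => //; apply: measurableT_comp => //.
- by move=> y x _; rewrite lee_fin mulr_ge0// hI.
rewrite ge0_integral_fsum//; last 2 first.
- move=> y; apply/measurable_EFinP; apply: measurable_funM => //.
  apply: measurable_funM => //.
- by move=> y x _; rewrite lee_fin mulr_ge0// hI.
apply: eq_fsbigr => r /[!inE] -[t _ htr].
have r0 : 0 <= r by rewrite -htr.
have mB : measurable (h @^-1` [set r]) by exact: measurable_funPTI.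
under eq_integral do rewrite mulrCA EFinM.
under [RHS]eq_integral do rewrite mulrCA EFinM.
rewrite !ge0_integralZl_EFin//; last 4 first.
- by move=> x _; rewrite lee_fin mulr_ge0.
- apply/measurable_EFinP; apply: measurable_funM => //; exact: mI.
- by move=> x _; rewrite lee_fin mulr_ge0.
- apply/measurable_EFinP; apply: measurable_funM => //.
  apply: measurableT_comp => //; exact: mI.
congr (_ * _)%E.
transitivity (\int[mu]_(x in g @^-1` (h @^-1` [set r])) (q x)%:E)%E.
  by rewrite -int_indic.
by rewrite H// -int_indic.
Qed.

End push.
Section push2.
Context (dd : measure_display) (T : measurableType dd) (R : realType).
Variable (mu : {measure set T -> \bar R}).
Variables (g : T -> T) (mg : measurable_fun setT g).
Variables (q p : T -> R) (q0 : forall x, 0 <= q x) (p0 : forall x, 0 <= p x).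
Variables (mq : measurable_fun setT q) (mp : measurable_fun setT p).
Hypothesis H : forall A, measurable A ->
  (\int[mu]_(x in g @^-1` A) (q x)%:E = \int[mu]_(x in A) (p x)%:E)%E.

Import HBNNSimple.

Lemma push_int (f : T -> R) (f0 : forall x, 0 <= f x) (mf : measurable_fun setT f) :
  (\int[mu]_x ((q x * f (g x))%:E) = \int[mu]_x ((p x * f x)%:E))%E.
Proof.
have mF : measurable_fun setT (EFin \o f) by exact/measurable_EFinP.
pose h := nnsfun_approx measurableT mF.
have cvh x : (EFin \o h^~ x) @ \oo --> (f x)%:E.
  by apply: cvg_nnsfun_approx => // t _; rewrite lee_fin.
have nd x a b : (a <= b)%N -> h a x <= h b x.
  by move=> ab; exact/lefP/nd_nnsfun_approx.
transitivity (limn (fun n => \int[mu]_x ((q x * h n (g x))%:E))%E).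
  rewrite -monotone_convergence//.
  - apply: eq_integral => x _; apply/esym/cvg_lim => //.
    rewrite EFinM; under eq_fun do rewrite EFinM.
    by apply: cvgeZl => //; exact: (cvh (g x)).
  - move=> n; apply/measurable_EFinP; apply: measurable_funM => //.
    exact: measurableT_comp.
  - by move=> n x _; rewrite lee_fin mulr_ge0.
  - by move=> x _ a b ab; rewrite lee_fin ler_wpM2l// nd.
transitivity (limn (fun n => \int[mu]_x ((p x * h n x)%:E))%E).
  suff -> : (fun n => \int[mu]_x ((q x * h n (g x))%:E))%E =
            (fun n => \int[mu]_x ((p x * h n x)%:E))%E by [].
  by apply/funext => n; exact: push_nnsfun.
rewrite -monotone_convergence//.
- apply: eq_integral => x _; apply/cvg_lim => //.
  rewrite EFinM; under eq_fun do rewrite EFinM.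
  by apply: cvgeZl => //; exact: (cvh x).
- by move=> n; apply/measurable_EFinP; apply: measurable_funM.
- by move=> n x _; rewrite lee_fin mulr_ge0.
- by move=> x _ a b ab; rewrite lee_fin ler_wpM2l// nd.
Qed.

End push2.
Section gibbs.
Context (R : realType).
Definition phi (a b : R) := a * ln (a / b) - a + b.

Lemma phi_key (a b : R) : 0 < a -> 0 < b ->
  phi a b = b * (expR (ln (a / b)) * (ln (a / b) - 1) + 1).
Proof.
move=> a0 b0; rewrite /phi lnK ?posrE ?divr_gt0//.
by rewrite mulrDr mulrA mulrCA divff ?gt_eqF// mulr1 mulr1; lra.
Qed.

Lemma phi_ge0 (a b : R) : 0 <= a -> 0 < b -> 0 <= phi a b.
Proof.
move=> a0 b0; have [->|a0'] := eqVneq a 0.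
  by rewrite /phi !mul0r subr0 add0r ltW.
have a_pos : 0 < a by rewrite lt_neqAle eq_sym a0' a0.
rewrite phi_key//; set u := ln (a / b).
have E0 := expR_gt0 u; have h1 := expR_ge1Dx (- u).
have EF : expR u * expR (- u) = 1 by rewrite -expRD subrr expR0.
apply: mulr_ge0; first exact: ltW.
have : 0 <= expR u * (expR (- u) - (1 + - u)) by apply: mulr_ge0; lra.
nra.
Qed.

Lemma phi_eq0 (a b : R) : 0 <= a -> 0 < b -> phi a b = 0 -> a = b.
Proof.
move=> a0 b0; have [->|a0'] := eqVneq a 0.
  by rewrite /phi !mul0r subr0 add0r => /eqP; rewrite gt_eqF.
have a_pos : 0 < a by rewrite lt_neqAle eq_sym a0' a0.
rewrite phi_key//; set u := ln (a / b) => h.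
have [u0|u0] := eqVneq u 0.
  have : expR u = a / b by rewrite lnK// posrE divr_gt0.
  rewrite u0 expR0 => /(congr1 (fun t => t * b)).
  by rewrite divfK ?gt_eqF// mul1r.
have E0 := expR_gt0 u.
have h1 : 1 + - u < expR (- u) by apply: expR_gt1Dx; rewrite oppr_eq0.
have EF : expR u * expR (- u) = 1 by rewrite -expRD subrr expR0.
have : 0 < expR u * (expR (- u) - (1 + - u)) by apply: mulr_gt0; lra.
move: h => /eqP; rewrite mulf_eq0 gt_eqF//= => /eqP h.
nra.
Qed.
End gibbs.
Section gen.
Context (dd : measure_display) (T : measurableType dd) (R : realType).
Variable (mu : {measure set T -> \bar R}).

Lemma lnq (a b : R) : 0 < b -> 0 <= a -> a * ln (a / b) = a * (ln a - ln b).
Proof.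
move=> b0 a0; have [->|an0] := eqVneq a 0; first by rewrite !mul0r.
have ap : 0 < a by rewrite lt_neqAle eq_sym an0 a0.
by rewrite lnM ?posrE ?invr_gt0// lnV ?posrE.
Qed.

Lemma mphi (q b : T -> R) : (forall x, 0 <= q x) -> (forall x, 0 < b x) ->
  measurable_fun setT q -> measurable_fun setT b ->
  measurable_fun setT (fun x => phi (q x) (b x)).
Proof.
move=> q0 b0 mq mb.
rewrite (_ : (fun x => _) = fun x => q x * (ln (q x) - ln (b x)) - q x + b x).
  apply: measurable_funD => //; apply: measurable_funB => //.
  apply: measurable_funM => //; apply: measurable_funB.
    exact: measurableT_comp (@measurable_ln R) mq.
  exact: measurableT_comp (@measurable_ln R) mb.
by apply/funext => x; rewrite /phi lnq.
Qed.

Lemma mL (q b : T -> R) : (forall x, 0 <= q x) -> (forall x, 0 < b x) ->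
  measurable_fun setT q -> measurable_fun setT b ->
  measurable_fun setT (fun x => q x * ln (q x / b x)).
Proof.
move=> q0 b0 mq mb.
rewrite (_ : (fun x => _) = fun x => q x * (ln (q x) - ln (b x))).
  apply: measurable_funM => //; apply: measurable_funB.
    exact: measurableT_comp (@measurable_ln R) mq.
  exact: measurableT_comp (@measurable_ln R) mb.
by apply/funext => x; rewrite lnq.
Qed.

Lemma KL_phi (q b : T -> R) : (forall x, 0 <= q x) -> (forall x, 0 < b x) ->
  measurable_fun setT q -> measurable_fun setT b ->
  (\int[mu]_x (q x)%:E = 1)%E -> (\int[mu]_x (b x)%:E = 1)%E ->
  (\int[mu]_x (q x * ln (q x / b x))%:E = \int[mu]_x (phi (q x) (b x))%:E)%E.
Proof.
move=> q0 b0 mq mb iq ib.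
set L := fun x => q x * ln (q x / b x).
have mL' : measurable_fun setT L by exact: mL.
have Lge x : q x - b x <= L x.
  by have := phi_ge0 (q0 x) (b0 x); rewrite /phi /L; lra.
rewrite integralE.
rewrite (_ : funepos (fun x => (L x)%:E) = EFin \o (funrpos L)); last exact: funerpos.
rewrite (_ : funeneg (fun x => (L x)%:E) = EFin \o (funrneg L)); last exact: funerneg.
have nfin : (\int[mu]_x (EFin \o (funrneg L)) x)%E \is a fin_num.
  rewrite ge0_fin_numE ?integral_ge0//; last by move=> x _; rewrite lee_fin.
  apply: (@le_lt_trans _ _ 1%E); last exact: ltey.
  rewrite -ib; apply: ge0_le_integral => //.
  - by move=> x _; rewrite lee_fin.
  - by apply/measurable_EFinP; exact: measurable_funrneg.
  - exact/measurable_EFinP.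
  - move=> x _; rewrite lee_fin /funrneg ge_max (ltW (b0 x)) andbT.
    by have := Lge x; have := q0 x; lra.
have key : (\int[mu]_x (EFin \o (funrpos L)) x + \int[mu]_x (b x)%:E =
   \int[mu]_x (phi (q x) (b x))%:E + \int[mu]_x (q x)%:E
     + \int[mu]_x (EFin \o (funrneg L)) x)%E.
  rewrite -ge0_integralD//; last 4 first.
  - by move=> x _; rewrite lee_fin.
  - by apply/measurable_EFinP; exact: measurable_funrpos.
  - by move=> x _; rewrite lee_fin ltW.
  - by apply/measurable_EFinP.
  rewrite -ge0_integralD//; last 4 first.
  - by move=> x _; rewrite lee_fin phi_ge0.
  - by apply/measurable_EFinP; exact: mphi.
  - by move=> x _; rewrite lee_fin.
  - by apply/measurable_EFinP.
  rewrite -ge0_integralD//; last 4 first.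
  - by move=> x _; rewrite lee_fin addr_ge0// phi_ge0.
  - by apply/measurable_EFinP; apply: measurable_funD => //; exact: mphi.
  - by move=> x _; rewrite lee_fin.
  - by apply/measurable_EFinP; exact: measurable_funrneg.
  apply: eq_integral => x _; rewrite /= -!EFinD; congr EFin.
  have hL : funrpos L x - funrneg L x = L x := congr1 (fun h => h x) (funrposBneg L).
  rewrite /phi -/(L x); lra.
rewrite iq ib in key.
have : (\int[mu]_x (EFin \o (funrpos L)) x =
   \int[mu]_x (phi (q x) (b x))%:E + \int[mu]_x (EFin \o (funrneg L)) x)%E.
  rewrite -(addeK (\int[mu]_x (EFin \o (funrpos L)) x) (x:=1%E))// key.
  by rewrite -(addeA _ 1%E) (addeC 1%E) addeA addeK.
by move=> ->; rewrite addeK.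
Qed.

End gen.
Section chain.
Context (R : realType).
Lemma phi_chain (a G P mp mn : R) : 0 <= a -> 0 < G -> 0 < P ->
  mp - mn = ln (P / G) ->
  phi a G + a * mn + P = phi a P + a * mp + G.
Proof.
move=> a0 G0 P0 hm; have [->|an0] := eqVneq a 0.
  by rewrite /phi !mul0r; lra.
have ap : 0 < a by rewrite lt_neqAle eq_sym an0 a0.
have hl : ln (a / G) = ln (a / P) + ln (P / G).
  rewrite -lnM ?posrE ?divr_gt0//; congr ln.
  by rewrite mulrA divfK ?gt_eqF.
rewrite /phi hl -hm; ring.
Qed.

Lemma phi_aa (a : R) : 0 < a -> phi a a = 0.
Proof. by move=> a0; rewrite /phi divff ?gt_eqF// ln1 mulr0; lra. Qed.
End chain.
Section int3.
Context (dd : measure_display) (T : measurableType dd) (R : realType).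
Variable (mu : {measure set T -> \bar R}).
Lemma int3 (f1 f2 f3 : T -> R) :
  (forall x, 0 <= f1 x) -> (forall x, 0 <= f2 x) -> (forall x, 0 <= f3 x) ->
  measurable_fun setT f1 -> measurable_fun setT f2 -> measurable_fun setT f3 ->
  (\int[mu]_x (f1 x + f2 x + f3 x)%:E =
   \int[mu]_x (f1 x)%:E + \int[mu]_x (f2 x)%:E + \int[mu]_x (f3 x)%:E)%E.
Proof.
move=> h1 h2 h3 m1 m2 m3.
under eq_integral do rewrite !EFinD.
rewrite ge0_integralD//; last 4 first.
- by move=> x _; rewrite -EFinD lee_fin addr_ge0.
- by apply: emeasurable_funD; exact/measurable_EFinP.
- by move=> x _; rewrite lee_fin.
- exact/measurable_EFinP.
rewrite ge0_integralD//.
- by move=> x _; rewrite lee_fin.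
- exact/measurable_EFinP.
- by move=> x _; rewrite lee_fin.
- exact/measurable_EFinP.
Qed.
End int3.
Lemma ecancel (R : realType) (X Y W B : \bar R) : B \is a fin_num ->
  (X + B + 1 = Y + (W + B + 1) -> X = Y + W)%E.
Proof.
move=> Bf; rewrite !addeA => /(congr1 (fun t => t - 1 - B)%E).
by rewrite !addeK.
Qed.
Lemma ecancel2 (R : realType) (Y W : \bar R) : W \is a fin_num ->
  (Y + W = W -> Y = 0)%E.
Proof.
by move=> Wf /(congr1 (fun t => t - W)%E); rewrite addeK// subee.
Qed.

Unset Implicit Arguments. Set Strict Implicit.

Theorem theorem2 (R : realType) (d : nat)
  (lam : {measure set (d.-tuple R) -> \bar R})
  (Hlam : is_lebesgue_measure lam)
  (g : d.-tuple R -> d.-tuple R) (mg : measurable_fun setT g)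
  (r : d.-tuple R -> R) (mr : measurable_fun setT r)
  (alpha : R) (halpha : 0 < alpha)
  (hfin : (\int[lam]_x (std_gauss x * expR (r (g x) / alpha))%:E < +oo)%E)
  (pbase : d.-tuple R -> R) (hpbase : is_density lam pbase)
  (hpush : pushforward_has_density lam g (@std_gauss R d) pbase) :
  let Zstar := (\int[lam]_x (pbase x * expR (r x / alpha))%:E)%E in
  let pstar := fun x => pbase x * expR (r x / alpha) / fine Zstar in
  let p0star := fun x0 => std_gauss x0 * expR (r (g x0) / alpha) / fine Zstar in
  [/\ (Zstar = \int[lam]_x0 (std_gauss x0 * expR (r (g x0) / alpha))%:E)%E,
      (* (1) *)
      is_density lam p0star /\ pushforward_has_density lam g p0star pstar,
      (* (2) p0star minimizes KL(. || p0) over the admissible noise densities *)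
      (forall q0, is_density lam q0 -> pushforward_has_density lam g q0 pstar ->
         (KL lam p0star (@std_gauss R d) <= KL lam q0 (@std_gauss R d))%E) &
      (* (2) uniqueness (a.e.), when the minimum value is finite *)
      (KL lam p0star (@std_gauss R d) < +oo)%E ->
      forall q0, is_density lam q0 -> pushforward_has_density lam g q0 pstar ->
         KL lam q0 (@std_gauss R d) = KL lam p0star (@std_gauss R d) ->
         {ae lam, forall x, q0 x = p0star x}].
Proof.
move=> Zstar pstar p0star.
set G := @std_gauss R d.
have G0 x : 0 < G x.
  rewrite /G /std_gauss mulr_gt0 ?expR_gt0// invr_gt0 exprn_gt0// sqrtr_gt0.
  by rewrite mulr_gt0// pi_gt0.
have mG : measurable_fun setT G.
  apply: measurable_funM => //; apply: measurableT_comp => //.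
  apply: measurable_funM => //; apply: measurable_funN.
  apply: measurable_sum => i; apply: measurable_funX.
  exact: measurable_tnth.
pose E := fun y => expR (r y / alpha).
have E0 y : 0 < E y by exact: expR_gt0.
have mE : measurable_fun setT E.
  apply: measurableT_comp => //; exact: measurable_funM.
have mEg : measurable_fun setT (E \o g) by exact: measurableT_comp.
have [mpb pb0 intpb] := hpbase.
have intG : (\int[lam]_x (G x)%:E = 1)%E.
  by have := hpush _ measurableT; rewrite preimage_setT intpb.
have PI := push_int mg (fun x => ltW (G0 x)) pb0 mG mpb hpush.
have Zeq : Zstar = (\int[lam]_x (G x * E (g x))%:E)%E.
  by rewrite (PI E) // => x; exact: ltW.
have mGEg : measurable_fun setT (fun x => G x * E (g x)) by exact: measurable_funM.
have Zge0 : (0 <= \int[lam]_x (G x * E (g x))%:E)%E.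
  by apply: integral_ge0 => x _; rewrite lee_fin mulr_ge0// ltW.
have Zn0 : (\int[lam]_x (G x * E (g x))%:E != 0)%E.
  apply/eqP => Z0.
  have : (\int[lam]_x `|(G x * E (g x))%:E| = 0)%E.
    by rewrite -Z0; apply: eq_integral => x _; rewrite gee0_abs// lee_fin mulr_ge0// ltW.
  have mGEg' : measurable_fun setT (fun x => (G x * E (g x))%:E) by exact/measurable_EFinP.
  move/(ae_eq_integral_abs lam measurableT mGEg') => hae.
  have : (\int[lam]_x (G x)%:E = \int[lam]_x (cst 0%E) x)%E.
    apply: ae_eq_integral => //; first exact/measurable_EFinP.
    apply: filterS hae => x /= h _.
    have := h I; move/eqP; rewrite eqe mulf_eq0 !gt_eqF//.
  by rewrite intG integral0 => /eqP; rewrite onee_eq0.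
have Zlt : (0 < \int[lam]_x (G x * E (g x))%:E < +oo)%E.
  by rewrite hfin andbT lt0e Zn0 Zge0.
set z := fine Zstar.
have zE : Zstar = z%:E by rewrite /z fineK// Zeq ge0_fin_numE.
have z0 : 0 < z by rewrite /z Zeq fine_gt0.
have ZE : (\int[lam]_x (G x * E (g x))%:E = z%:E)%E by rewrite -Zeq.
have P0 x : 0 < p0star x.
  by apply: divr_gt0; [apply: mulr_gt0; [exact: G0|exact: expR_gt0]|exact: z0].
have mP : measurable_fun setT p0star.
  by apply: measurable_funM => //; exact: measurable_funM.
have intP : (\int[lam]_x (p0star x)%:E = 1)%E.
  transitivity (\int[lam]_x ((z^-1)%:E * (G x * E (g x))%:E))%E.
    by apply: eq_integral => x _; rewrite -EFinM mulrC.
  rewrite ge0_integralZl_EFin//; last 3 first.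
  - by move=> x _; rewrite lee_fin mulr_ge0// ltW.
  - exact/measurable_EFinP.
  - by rewrite invr_ge0 ltW.
  by rewrite ZE -EFinM mulVf ?gt_eqF.
have mps : measurable_fun setT pstar.
  by apply: measurable_funM => //; exact: measurable_funM.
have ps0 x : 0 <= pstar x.
  apply: divr_ge0; [apply: mulr_ge0; [exact: pb0|exact: expR_ge0]|exact: (ltW z0)].
have pushP : pushforward_has_density lam g p0star pstar.
  move=> A mA; rewrite -[LHS]int_indic -[RHS]int_indic.
  pose F := fun y => E y / z * \1_A y.
  have F0 y : 0 <= F y.
    apply: mulr_ge0; last by rewrite indicE.
    by apply: divr_ge0; [exact: expR_ge0|exact: (ltW z0)].
  have mF : measurable_fun setT F.
    apply: measurable_funM; first exact: measurable_funM.
    exact: measurable_indic.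
  transitivity (\int[lam]_x (G x * F (g x))%:E)%E.
    by apply: eq_integral => x _; rewrite /F !mulrA.
  rewrite (PI F)//; apply: eq_integral => x _.
  by rewrite /F !mulrA.
pose k := fun y => r y / alpha - ln z.
have mk : measurable_fun setT k.
  by apply: measurable_funB => //; exact: measurable_funM.
have Pk x : p0star x = G x * expR (k (g x)).
  by rewrite /k expRD expRN lnK ?posrE// mulrA.
have lnPG x : ln (p0star x / G x) = k (g x).
  by rewrite Pk mulrC mulrA mulVf ?gt_eqF// mul1r expRK.
have hpn x : funrpos k (g x) - funrneg k (g x) = ln (p0star x / G x).
  by rewrite lnPG; exact: (congr1 (fun h => h (g x)) (funrposBneg k)).
have aux (t : R) : expR t * Num.max (- t) 0 <= 1.
  have [t0|t0] := leP 0 t.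
    by rewrite max_r ?mulr0// oppr_le0.
  rewrite max_l; last by rewrite oppr_ge0 ltW.
  have h1 := expR_ge1Dx (- t).
  have EF : expR t * expR (- t) = 1 by rewrite -expRD subrr expR0.
  have E1 := expR_gt0 t.
  have : 0 <= expR t * (expR (- t) - (1 + - t)) by apply: mulr_ge0; lra.
  nra.
pose B := (\int[lam]_x (p0star x * funrneg k (g x))%:E)%E.
pose A := (\int[lam]_x (p0star x * funrpos k (g x))%:E)%E.
have Bfin : B \is a fin_num.
  rewrite ge0_fin_numE; last first.
    by apply: integral_ge0 => x _; rewrite lee_fin mulr_ge0// ltW.
  apply: (@le_lt_trans _ _ 1%E); last exact: ltey.
  rewrite -intG; apply: ge0_le_integral => //.
  - by move=> x _; rewrite lee_fin mulr_ge0// ltW.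
  - apply/measurable_EFinP; apply: measurable_funM => //.
    exact: measurableT_comp (measurable_funrneg mk) mg.
  - exact/measurable_EFinP.
  - move=> x _; rewrite lee_fin Pk -mulrA -[leRHS]mulr1 ler_wpM2l// ?ltW//.
have mkp : measurable_fun setT (fun x => funrpos k (g x)).
  exact: measurableT_comp (measurable_funrpos mk) mg.
have mkn : measurable_fun setT (fun x => funrneg k (g x)).
  exact: measurableT_comp (measurable_funrneg mk) mg.
have pushq (q : d.-tuple R -> R) (h : d.-tuple R -> R) :
    (forall x, 0 <= q x) -> measurable_fun setT q ->
    pushforward_has_density lam g q pstar ->
    (forall y, 0 <= h y) -> measurable_fun setT h ->
    (\int[lam]_x (q x * h (g x))%:E = \int[lam]_x (p0star x * h (g x))%:E)%E.
  move=> q0 mq hq h0 mh.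
  rewrite (push_int mg q0 ps0 mq mps hq)//.
  by rewrite (push_int mg (fun x => ltW (P0 x)) ps0 mP mps pushP).
have chain (q : d.-tuple R -> R) : (forall x, 0 <= q x) -> measurable_fun setT q ->
    pushforward_has_density lam g q pstar ->
    (\int[lam]_x (phi (q x) (G x))%:E + B + 1 =
     \int[lam]_x (phi (q x) (p0star x))%:E + A + 1)%E.
  move=> q0 mq hq.
  have e1 : (\int[lam]_x (phi (q x) (G x) + q x * funrneg k (g x) + p0star x)%:E =
      \int[lam]_x (phi (q x) (p0star x) + q x * funrpos k (g x) + G x)%:E)%E.
    by apply: eq_integral => x _; rewrite (phi_chain (q0 x) (G0 x) (P0 x) (hpn x)).
  have a1 x : 0 <= phi (q x) (G x) by apply: phi_ge0.
  have a2 x : 0 <= q x * funrneg k (g x) by apply: mulr_ge0.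
  have a3 x : 0 <= p0star x by exact: ltW.
  have b1 x : 0 <= phi (q x) (p0star x) by apply: phi_ge0.
  have b2 x : 0 <= q x * funrpos k (g x) by apply: mulr_ge0.
  have b3 x : 0 <= G x by exact: ltW.
  have ma1 : measurable_fun setT (fun x => phi (q x) (G x)) by exact: mphi.
  have ma2 : measurable_fun setT (fun x => q x * funrneg k (g x)) by exact: measurable_funM.
  have mb1 : measurable_fun setT (fun x => phi (q x) (p0star x)) by exact: mphi.
  have mb2 : measurable_fun setT (fun x => q x * funrpos k (g x)) by exact: measurable_funM.
  rewrite (@int3 _ _ _ lam _ _ _ a1 a2 a3 ma1 ma2 mP) in e1.
  rewrite (@int3 _ _ _ lam _ _ _ b1 b2 b3 mb1 mb2 mG) in e1.
  rewrite intP intG (pushq q (funrneg k)) // ?(pushq q (funrpos k)) // in e1.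
  - exact: measurable_funrpos.
  - exact: measurable_funrneg.
have KLE (q : d.-tuple R -> R) :
    KL lam q G = (\int[lam]_x (q x * ln (q x / G x))%:E)%E.
  apply: eq_integral => x _; rewrite /kl_integrand.
  case: eqP => [->|_]; first by rewrite mul0r.
  by rewrite leNgt G0.
have phiPP : (\int[lam]_x (phi (p0star x) (p0star x))%:E = 0)%E.
  by under eq_integral do rewrite phi_aa//; rewrite integral0.
have chP := chain p0star (fun x => ltW (P0 x)) mP pushP.
rewrite phiPP add0e in chP.
have WE : KL lam p0star G = (\int[lam]_x (phi (p0star x) (G x))%:E)%E.
  by rewrite KLE KL_phi//; move=> x; exact: ltW.
have W0 : (0 <= KL lam p0star G)%E.
  by rewrite WE; apply: integral_ge0 => x _; rewrite lee_fin phi_ge0// ltW.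
have XY (q : d.-tuple R -> R) : is_density lam q ->
    pushforward_has_density lam g q pstar ->
    KL lam q G = (\int[lam]_x (phi (q x) (p0star x))%:E + KL lam p0star G)%E.
  move=> [mq q0 iq] hq.
  rewrite KLE KL_phi// WE.
  have h := chain q q0 mq hq.
  rewrite -[X in _ = X]addeA -chP in h.
  exact: (ecancel Bfin h).
split.
- exact: Zeq.
- split => //; split => //; move=> x; exact: ltW.
- move=> q hd hq; rewrite (XY q hd hq); apply: leeDr.
  have [_ q0 _] := hd.
  by apply: integral_ge0 => x _; rewrite lee_fin; exact: phi_ge0 (q0 x) (P0 x).
- move=> Wfin q hd hq heq.
  have Wf : KL lam p0star G \is a fin_num by rewrite ge0_fin_numE.
  rewrite (XY q hd hq) in heq.
  have Y0 := ecancel2 Wf heq.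
  have [mq q0 iq] := hd.
  have mph : measurable_fun setT (fun x => (phi (q x) (p0star x))%:E).
    by apply/measurable_EFinP; apply: mphi.
  have : (\int[lam]_x `|(phi (q x) (p0star x))%:E| = 0)%E.
    rewrite -Y0; apply: eq_integral => x _.
    by rewrite gee0_abs// lee_fin; exact: phi_ge0 (q0 x) (P0 x).
  move/(ae_eq_integral_abs lam measurableT mph) => hae.
  apply: filterS hae => x /= h.
  apply: (phi_eq0 (q0 x) (P0 x)).
  by have := h I => -[].
Qed.
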